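(* Consider online multiclass classification with an arbitrary feedback graph $\mathcal{G}=([K],\mathcal{E})$, and suppose that for every round $t$, $\ell_t=\ell(\cdot,\mathbf{x}_t,y_t)$ is a regular surrogate loss with respect to $\ell$ with constant $L$. Suppose the OCO algorithm $\mathcal{A}$ satisfies, for some $h:\mathcal{W}\to\mathbb{R}_+$ and every $\mathbf{U}\in\mathcal{W}$, $\sum_{t=1}^T(\widehat\ell_t(\mathbf{W}_t)-\widehat\ell_t(\mathbf{U}))\le h(\mathbf{U})\sqrt{\sum_{t=1}^T\|\widehat{\mathbf{g}}_t\|^2}$ with $\widehat{\mathbf{g}}_t=v_t\nabla\ell_t(\mathbf{W}_t)$. Then for any realization of the randomized predictions $y_1',\dots,y_T'$, Gappletron run on $\mathcal{G}$ with $\mathcal{A}$ and a gap map $a:\mathbb{R}^{K\times d}\times\mathbb{R}^d\to[0,1]$ satisfying $a(\mathbf{W}_t,\mathbf{x}_t)=\ell(\mathbf{W}_t,\mathbf{x}_t,y_t^\star)$ satisfies, for all $\mathbf{U}\in\mathcal{W}$, $$\sum_{t=1}^T\sum_{y\in[K]}p_t'(y)\mathbb{1}[y\ne y_t]\le\sum_{t=1}^T\widehat\ell_t(\mathbf{U})+\sum_{t=1}^T\gamma_t+\inf_{\eta>0}\Big\{\frac{h(\mathbf{U})^2}{2\eta}+\sum_{t=1}^T\Big(\frac{K-1}{K}\ell_t(\mathbf{W}_t)-v_t\ell_t(\mathbf{W}_t)+\eta v_t^2L\ell_t(\mathbf{W}_t)\Big)\Big\}.$$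
   Context: Setting: for $t=1,\dots,T$ an oblivious adversary fixes $\mathbf{x}_t\in\mathbb{R}^d$ and $y_t\in[K]=\{1,\dots,K\}$; the learner sees $\mathbf{x}_t$ and predicts $y_t'\in[K]$. A feedback graph is a directed graph $\mathcal{G}=([K],\mathcal{E})$ in which every node has at least one incoming edge (self-loops allowed); $\mathrm{out}(y')=\{y:(y',y)\in\mathcal{E}\}$. After predicting $y_t'$ the learner observes $(y,\mathbb{1}[y\ne y_t])$ for $y\in\mathrm{out}(y_t')$; if a node has $K-1$ outgoing edges the missing edge is added. $\mathcal{Q}=\{y':\mathrm{out}(y')=[K]\}$ (revealing actions, possibly empty). A dominating set is $S\subseteq[K]$ such that every $y\in[K]$ lies in $\mathrm{out}(y')$ for some $y'\in S$; $\rho$ is the minimum size of a dominating set and $S$ is a minimum dominating set. $\mathbf{1}$ all-ones vector, $\mathbf{1}_S$ indicator of $S$, $\mathbf{e}_k$ basis vectors of $\mathbb{R}^K$; $P_t$ is probability conditional on past predictions and feedback. Predictors $\mathbf{W}\in\mathcal{W}\subseteq\mathbb{R}^{K\times d}$ ($\mathcal{W}$ convex), rows $\mathbf{W}^k$, identified with vectors of $\mathbb{R}^{Kd}$; $\|\cdot\|$ a fixed norm on $\mathbb{R}^{Kd}$. $\ell:\mathcal{W}\times\mathbb{R}^d\times[K]\to\mathbb{R}_+$ is convex in $\mathbf{W}$ with $\frac{K-1}{K}\ell(\mathbf{W},\mathbf{x},y)+\frac1K\ell(\mathbf{W},\mathbf{x},y^\star)\ge1$ for all $\mathbf{W},\mathbf{x}$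 and $y\ne y^\star:=\arg\max_k\langle\mathbf{W}^k,\mathbf{x}\rangle$; $\ell_t$ is regular with constant $L>0$ if moreover $\|\nabla\ell_t(\mathbf{W})\|^2\le2L\ell_t(\mathbf{W})$ for all $\mathbf{W}\in\mathcal{W}$. Gappletron (inputs $\mathcal{Q}$, $S$, OCO algorithm $\mathcal{A}$ on $\mathcal{W}$, $\gamma\ge0$, gap map $a$): $\mathbf{W}_1$ from $\mathcal{A}$; at round $t$: $y_t^\star=\arg\max_k\langle\mathbf{W}_t^k,\mathbf{x}_t\rangle$; $\gamma_t=0$ if $y_t^\star\in\mathcal{Q}$, else $\gamma_t=\min\{\tfrac12,\gamma/\sqrt{|\{s\le t:y_s^\star\notin\mathcal{Q}\}|}\}$; $a_t=a(\mathbf{W}_t,\mathbf{x}_t)$; $\zeta_t=\mathbb{1}[\gamma_t\le a_t]$; $\mathbf{p}_t'=(1-\zeta_ta_t-(1-\zeta_t)\gamma_t)\mathbf{e}_{y_t^\star}+\zeta_ta_t\frac1K\mathbf{1}+(1-\zeta_t)\frac{\gamma_t}{\rho}\mathbf{1}_S$; predict $y_t'\sim\mathbf{p}_t'$; $v_t=\mathbb{1}[y_t\in\mathrm{out}(y_t')]/P_t(y_t\in\mathrm{out}(y_t'))$; $\widehat\ell_t(\mathbf{W})=v_t\ell_t(\mathbf{W})$ is fed to $\mathcal{A}$, which returns $\mathbf{W}_{t+1}$. *)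

(* Defs.v *)
From HB Require Import structures.
From mathcomp Require Import all_boot all_order all_algebra.
From mathcomp Require Import all_classical all_reals all_analysis.
Set Implicit Arguments. Unset Strict Implicit. Unset Printing Implicit Defensive.
Import Order.TTheory GRing.Theory Num.Theory.
Import numFieldNormedType.Exports.
Local Open Scope ring_scope.


Section Gappletron.
Variables (R : realType) (K d : nat).
Local Notation Mx := 'M[R]_(K, d).
Local Notation Xv := 'rV[R]_d.

Definition score (W : Mx) (x : Xv) (k : 'I_K) : R := \sum_(j < d) W k j * x ord0 j.

Definition is_argmax_rule (amax : Mx -> Xv -> 'I_K) : Prop :=
  forall W x k, score W x k <= score W x (amax W x).

(* Frobenius-type pairing, identifying 'M_(K,d) with R^{Kd} *)
Definition mxdot (G H : Mx) : R := \sum_(i < K) \sum_(j < d) G i j * H i j.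

Definition is_gradient (f : Mx -> R) (W G : Mx) : Prop :=
  differentiable f W /\ forall H : Mx, 'd f W H = mxdot G H.

Definition is_norm (N : Mx -> R) : Prop :=
  [/\ forall u, 0 <= N u, forall u, N u = 0 -> u = 0,
      forall a u, N (a *: u) = `|a| * N u & forall u v, N (u + v) <= N u + N v].

Definition convex_mxset (S : set Mx) : Prop :=
  forall U V (lam : R), S U -> S V -> 0 <= lam <= 1 -> S (lam *: U + (1 - lam) *: V).

Definition convex_on (S : set Mx) (f : Mx -> R) : Prop :=
  forall U V (lam : R), S U -> S V -> 0 <= lam <= 1 ->
    f (lam *: U + (1 - lam) *: V) <= lam * f U + (1 - lam) * f V.

Definition feedback_graph (E : rel 'I_K) : Prop := forall y, exists y', E y' y.

Definition outn (E : rel 'I_K) (y' : 'I_K) : {set 'I_K} :=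
  if #|[set y | E y' y]| == K.-1 then [set: 'I_K] else [set y | E y' y].

Definition revealing (E : rel 'I_K) : {set 'I_K} := [set y' | outn E y' == [set: 'I_K]].

Definition dominating (E : rel 'I_K) (S : {set 'I_K}) : Prop :=
  forall y, exists2 y', y' \in S & y \in outn E y'.

Definition min_dominating (E : rel 'I_K) (S : {set 'I_K}) : Prop :=
  dominating E S /\ forall S', dominating E S' -> (#|S| <= #|S'|)%N.

(* gamma_t, for rounds t = 1, 2, ... *)
Definition gamma_t (Q : {set 'I_K}) (gam : R) (ystar : nat -> 'I_K) (t : nat) : R :=
  if ystar t \in Q then 0
  else Num.min (1 / 2) (gam / Num.sqrt (count (fun s => ystar s \notin Q) (iota 1 t))%:R).

Definition pdist (S : {set 'I_K}) (ys : 'I_K) (g a : R) (y : 'I_K) : R :=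
  let z : R := (g <= a)%R%:R in
  (1 - z * a - (1 - z) * g) * (y == ys)%:R + z * a / K%:R
  + (1 - z) * g / #|S|%:R * (y \in S)%:R.

Definition pobs (E : rel 'I_K) (p : 'I_K -> R) (yt : 'I_K) : R :=
  \sum_(y' < K) p y' * (yt \in outn E y')%:R.

Definition vweight (E : rel 'I_K) (p : 'I_K -> R) (yt y't : 'I_K) : R :=
  (yt \in outn E y't)%:R / pobs E p yt.

End Gappletron.

(* Main.v *)
Require Import Defs.
From HB Require Import structures.
From mathcomp Require Import all_boot all_order all_algebra.
From mathcomp Require Import all_classical all_reals all_analysis.
From mathcomp Require Import ring lra.
Import Order.TTheory GRing.Theory Num.Theory.
Import numFieldNormedType.Exports.
Local Open Scope ring_scope.

Lemma sum_ind (R : realType) K (c : R) (ys : 'I_K) :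
  \sum_(k < K) c * (k == ys)%:R = c.
Proof.
rewrite (bigD1 ys) //= eqxx mulr1 big1 ?addr0 // => k /negbTE ->; by rewrite mulr0.
Qed.

Lemma round_bound (R : realType) K (S : {set 'I_K}) (ys yt : 'I_K) (g a ly : R) :
 (0 < #|S|)%N -> 0 <= g -> 0 <= a -> 0 <= ly ->
 (yt != ys -> 1 <= (K%:R-1)/K%:R * ly + 1/K%:R * a) ->
 (ys = yt -> ly = a) ->
 \sum_(k<K) pdist S ys g a k * (k != yt)%:R <= (K%:R-1)/K%:R * ly + g.
Proof.
move=> S0 g0 a0 l0 Hne Heq.
have K0 : (0 < K)%N by case: K ys {S S0 yt Hne Heq} => [[]|].
have KR : 0 < K%:R :> R by rewrite ltr0n.
have K1 : 1 <= K%:R :> R by rewrite ler1n.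
have S0' : 0 < #|S|%:R :> R by rewrite ltr0n.
set p := pdist S ys g a.
have tot : \sum_(k < K) p k = 1.
  rewrite /p /pdist /=.
  rewrite big_split big_split /= sum_ind sumr_const card_ord -big_distrr /=.
  have -> : \sum_(i < K) (i \in S)%:R = #|S|%:R :> R.
    rewrite -sum1_card natr_sum [RHS]big_mkcond; apply: eq_bigr => i _; by case: (_ \in _).
  rewrite -[_ *+ K]mulr_natr !divfK ?lt0r_neq0 //; ring.
have e : \sum_(k < K) p k * (k != yt)%:R = 1 - p yt.
  rewrite -[in RHS]tot [in RHS](bigD1 yt) //= [LHS](bigD1 yt) //= eqxx mulr0 add0r addrC addrK.
  by apply: eq_bigr => k ->; rewrite mulr1.
rewrite e /p /pdist.
have iK0 : 0 < K%:R^-1 :> R by rewrite invr_gt0.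
have iK1 : K%:R^-1 <= 1 :> R by rewrite invf_le1.
have KK : (K%:R - 1) / K%:R = 1 - K%:R^-1 :> R by rewrite mulrBl divff ?lt0r_neq0 // mul1r.
rewrite KK; move: Hne; rewrite KK mul1r => Hne.
set iK := K%:R^-1 in iK0 iK1 Hne *.
have hb : 0 <= g / #|S|%:R * (yt \in S)%:R by rewrite !mulr_ge0 // invr_ge0 ltW.
have haK : a * iK <= a by rewrite ler_piMr.
have haK0 : 0 <= a * iK by rewrite mulr_ge0 // ltW.
have hlK : 0 <= (1 - iK) * ly by rewrite mulr_ge0 // subr_ge0.
case: (eqVneq yt ys) => [ee|Hn].
- rewrite mulr1 (Heq (esym ee)).
  case: (boolP (g <= a)) => ga /=.
  + rewrite !mul1r subrr !mul0r addr0. lra.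
  + rewrite !mul0r !subr0 !mul1r addr0. lra.
- rewrite mulr0 add0r.
  have := Hne Hn.
  case: (boolP (g <= a)) => ga /=.
  + rewrite !mul1r subrr !mul0r addr0. lra.
  + rewrite !mul0r !subr0 !mul1r add0r. move: ga; rewrite -ltNge => ga. lra.
Qed.

Theorem lemma2 (R : realType) (K d T : nat)
  (E : rel 'I_K) (S : {set 'I_K})
  (Wset : set 'M[R]_(K, d)) (N : 'M[R]_(K, d) -> R)
  (loss : 'M[R]_(K, d) -> 'rV[R]_d -> 'I_K -> R)
  (gradl : 'M[R]_(K, d) -> 'rV[R]_d -> 'I_K -> 'M[R]_(K, d)) (L : R)
  (amax : 'M[R]_(K, d) -> 'rV[R]_d -> 'I_K)
  (x : nat -> 'rV[R]_d) (y : nat -> 'I_K)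
  (A : seq ('M[R]_(K, d) -> R) -> 'M[R]_(K, d)) (gam : R)
  (a : 'M[R]_(K, d) -> 'rV[R]_d -> R) (h : 'M[R]_(K, d) -> R)
  (W : nat -> 'M[R]_(K, d)) (y' : nat -> 'I_K) :
  feedback_graph E ->
  min_dominating E S ->
  convex_mxset Wset ->
  is_norm N ->
  is_argmax_rule amax ->
  (forall V z k, Wset V -> 0 <= loss V z k) ->
  (forall z k, convex_on Wset (fun V => loss V z k)) ->
  (forall V z k, Wset V -> k != amax V z ->
     1 <= (K%:R - 1) / K%:R * loss V z k + 1 / K%:R * loss V z (amax V z)) ->
  (forall V z k, Wset V -> is_gradient (fun U => loss U z k) V (gradl V z k)) ->
  0 < L ->
  (forall t, (1 <= t <= T)%N -> forall V, Wset V ->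
     N (gradl V (x t) (y t)) ^+ 2 <= 2 * L * loss V (x t) (y t)) ->
  0 <= gam ->
  (forall V z, 0 <= a V z <= 1) ->
  (forall hist, Wset (A hist)) ->
  let ystar t := amax (W t) (x t) in
  let Q := revealing E in
  let gt t := gamma_t Q gam ystar t in
  let p t := pdist S (ystar t) (gt t) (a (W t) (x t)) in
  let v t := vweight E (p t) (y t) (y' t) in
  let lhat t V := v t * loss V (x t) (y t) in
  (forall t, (1 <= t <= T)%N -> W t = A [seq lhat s | s <- iota 1 t.-1]) ->
  (forall t, (1 <= t <= T)%N -> 0 < p t (y' t)) ->
  (forall t, (1 <= t <= T)%N -> a (W t) (x t) = loss (W t) (x t) (ystar t)) ->
  (forall U, Wset U -> 0 <= h U) ->
  (forall U, Wset U ->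
     \sum_(1 <= t < T.+1) (lhat t (W t) - lhat t U)
       <= h U * Num.sqrt (\sum_(1 <= t < T.+1) N (v t *: gradl (W t) (x t) (y t)) ^+ 2)) ->
  forall U, Wset U ->
    \sum_(1 <= t < T.+1) \sum_(k < K) p t k * (k != y t)%:R
      <= \sum_(1 <= t < T.+1) lhat t U + \sum_(1 <= t < T.+1) gt t
         + inf [set h U ^+ 2 / (2 * eta)
                    + \sum_(1 <= t < T.+1)
                        ((K%:R - 1) / K%:R * loss (W t) (x t) (y t)
                         - v t * loss (W t) (x t) (y t)
                         + eta * v t ^+ 2 * L * loss (W t) (x t) (y t))
               | eta in [set eta : R | 0 < eta]]%classic.
Proof.
move=> FG MD CS NN AM lpos lconv lK lgrad L0 lgradb gam0 a01 AW ystar Q gt p v lhat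
  HW Hp Ha hpos Hreg U WU.
have K0 : (0 < K)%N := leq_ltn_trans (leq0n _) (ltn_ord (y 0%N)).
have S0 : (0 < #|S|)%N.
  case: MD => Dom _; case: (Dom (y 0%N)) => y0 Hy0 _; apply/card_gt0P; by exists y0.
have WW : forall t, (1 <= t <= T)%N -> Wset (W t) by move=> t Ht; rewrite HW.
have g0 : forall t, 0 <= gt t.
  move=> t; rewrite /gt /gamma_t; case: ifP => _ //.
  by rewrite le_min; apply/andP; split; [|rewrite divr_ge0 // sqrtr_ge0].
have round : forall t, (1 <= t <= T)%N ->
    \sum_(k < K) p t k * (k != y t)%:R
      <= (K%:R - 1) / K%:R * loss (W t) (x t) (y t) + gt t.
  move=> t Ht; apply: round_bound => //.
  - by case/andP: (a01 (W t) (x t)).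
  - exact: lpos (WW t Ht).
  - by move=> Hn; rewrite (Ha t Ht); exact: lK (WW t Ht) Hn.
  - by rewrite (Ha t Ht) => ->.
set X := \sum_(1 <= t < T.+1) v t ^+ 2 * loss (W t) (x t) (y t).
have X0 : 0 <= X.
  rewrite /X big_nat; apply: sumr_ge0 => t Ht; rewrite mulr_ge0 ?sqr_ge0 //.
  exact: lpos (WW t Ht).
have HN : \sum_(1 <= t < T.+1) N (v t *: gradl (W t) (x t) (y t)) ^+ 2 <= 2 * L * X.
  rewrite /X big_distrr /=; apply: ler_sum_nat => t Ht.
  case: NN => _ _ NZ _; rewrite NZ exprMn real_normK ?num_real //.
  have Ht' : (1 <= t <= T)%N by rewrite -ltnS.
  rewrite [in leRHS]mulrCA; apply: ler_wpM2l; first exact: sqr_ge0.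
  exact: (lgradb t Ht' _ (WW t Ht')).
have key : forall eta, 0 < eta ->
    \sum_(1 <= t < T.+1) (lhat t (W t) - lhat t U)
      <= h U ^+ 2 / (2 * eta) + eta * L * X.
  move=> eta eta0.
  apply: le_trans (Hreg U WU) _.
  apply: le_trans (_ : h U * Num.sqrt (2 * L * X) <= _).
    by apply: ler_wpM2l; [exact: hpos|rewrite ler_sqrt // mulr_ge0 // mulr_ge0 // ltW].
  set s := Num.sqrt (2 * L * X).
  have s2 : s ^+ 2 = 2 * L * X by rewrite sqr_sqrtr // !mulr_ge0 // ltW.
  have -> : eta * L * X = eta * s ^+ 2 / 2 by rewrite s2; field.
  rewrite -subr_ge0.
  have -> : h U ^+ 2 / (2 * eta) + eta * s ^+ 2 / 2 - h U * s
      = (h U - eta * s) ^+ 2 / (2 * eta).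
    by field; rewrite lt0r_neq0.
  by rewrite divr_ge0 ?sqr_ge0 // mulr_ge0 // ltW.
have Herr : \sum_(1 <= t < T.+1) \sum_(k < K) p t k * (k != y t)%:R
    <= \sum_(1 <= t < T.+1) ((K%:R - 1) / K%:R * loss (W t) (x t) (y t))
       + \sum_(1 <= t < T.+1) gt t.
  by rewrite -big_split; apply: ler_sum_nat => t Ht; exact: round.
have Hsplit : forall eta,
    \sum_(1 <= t < T.+1)
      ((K%:R - 1) / K%:R * loss (W t) (x t) (y t)
       - v t * loss (W t) (x t) (y t)
       + eta * v t ^+ 2 * L * loss (W t) (x t) (y t))
    = \sum_(1 <= t < T.+1) ((K%:R - 1) / K%:R * loss (W t) (x t) (y t))
      - \sum_(1 <= t < T.+1) lhat t (W t) + eta * L * X.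
  move=> eta; rewrite big_split sumrB /= /X big_distrr /=; congr (_ + _).
  by apply: eq_bigr => t _; ring.
have main : forall eta, 0 < eta ->
    \sum_(1 <= t < T.+1) \sum_(k < K) p t k * (k != y t)%:R
      - \sum_(1 <= t < T.+1) lhat t U - \sum_(1 <= t < T.+1) gt t
    <= h U ^+ 2 / (2 * eta) +
        \sum_(1 <= t < T.+1)
           ((K%:R - 1) / K%:R * loss (W t) (x t) (y t) -
            v t * loss (W t) (x t) (y t) +
            eta * v t ^+ 2 * L * loss (W t) (x t) (y t)).
  move=> eta eta0; rewrite Hsplit; have := key eta eta0; rewrite sumrB.
  move: Herr; lra.
have Hinf := main.
set F := (X in _ <= _ + _ + inf X).
suff : \sum_(1 <= t < T.+1) \sum_(k < K) p t k * (k != y t)%:R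
      - \sum_(1 <= t < T.+1) lhat t U - \sum_(1 <= t < T.+1) gt t <= inf F by lra.
apply: lb_le_inf.
  by exists (h U ^+ 2 / (2 * 1) + \sum_(1 <= t < T.+1)
           ((K%:R - 1) / K%:R * loss (W t) (x t) (y t) -
            v t * loss (W t) (x t) (y t) +
            1 * v t ^+ 2 * L * loss (W t) (x t) (y t))); exists 1 => //=.
move=> _ [eta eta0 <-]; exact: main.
Qed.
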